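(* Let $X$ be a fake weighted projective plane with weights $(\lambda_0,\lambda_1,\lambda_2)$, and suppose there exists a one-step mutation from $X$ to a fake weighted projective plane $Y$. Then, after relabelling the weights, $\lambda_0$ divides $(\lambda_1+\lambda_2)^2$ and $Y$ has weights $$\left(\lambda_1,\lambda_2,\frac{(\lambda_1+\lambda_2)^2}{\lambda_0}\right).$$
   Context: Let $N\cong\mathbb{Z}^2$ be a lattice, $M=\mathrm{Hom}(N,\mathbb{Z})$ its dual, $N_\mathbb{Q}=N\otimes_\mathbb{Z}\mathbb{Q}$. A Fano polygon is a two-dimensional convex lattice polygon $P\subset N_\mathbb{Q}$ containing the origin in its interior whose vertices are primitive lattice points. For primitive $w\in M$ and $h\in\mathbb{Z}$ put $H_{w,h}=\{v\in N_\mathbb{Q}: w(v)=h\}$, $w_h(P)=\mathrm{conv}(H_{w,h}\cap P\cap N)$ (possibly empty), $h_{\min}=\min_{v\in P}w(v)$, $h_{\max}=\max_{v\in P}w(v)$. A factor of $P$ with respect to $w$ is a lattice polytope $F\subset N_\mathbb{Q}$ with $w(F)=\{0\}$ such that for each integer $h$ with $h_{\min}\le h<0$ there is a (possibly empty) lattice polytope $G_h\subset H_{w,h}$ with $H_{w,h}\cap \mathrm{V}(P)\subseteq G_h+(-h)F\subseteq w_h(P)$, where $\mathrm{V}(P)$ is the vertex set and $+$ is Minkowski sum. The (combinatorial) mutation is $\mathrm{mut}_w(P,F)=\mathrm{conv}\big(\bigcup_{h=h_{\min}}^{-1}G_h\cup\bigcup_{h=0}^{h_{\max}}(w_h(P)+hF)\big)$;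 up to automorphisms of $N$ it does not depend on the choice of the $G_h$, and it is again a Fano polygon. Polygons are isomorphic ($\cong$) if related by an automorphism of $N$. A Fano triangle $P=\mathrm{conv}(v_0,v_1,v_2)$ determines the toric surface $X_P$ whose fan consists of the cones over the faces of $P$; such a surface is a fake weighted projective plane. Its weights are the unique positive integers $\lambda_0,\lambda_1,\lambda_2$ with $\gcd(\lambda_0,\lambda_1,\lambda_2)=1$ and $\lambda_0v_0+\lambda_1v_1+\lambda_2v_2=0$; they are well-formed, i.e. pairwise coprime. A fake weighted projective plane $Y=X_Q$ is obtained from $X=X_P$ by a one-step mutation if $Q\cong\mathrm{mut}_w(P,F)$ for some primitive $w\in M$ and some factor $F$ of $P$ with respect to $w$. *)

(* Defs.v *)
(* Lattice N = Z^2 (pairs of ints), N_Q = Q^2 (pairs of rats). *)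
From HB Require Import structures.
From mathcomp Require Import all_boot all_order all_algebra.
Set Implicit Arguments. Unset Strict Implicit. Unset Printing Implicit Defensive.
Import Order.TTheory GRing.Theory Num.Theory.
Local Open Scope ring_scope.

Definition lpt := (int * int)%type.          (* lattice points of N (and of M) *)
Definition qpt := (rat * rat)%type.
Definition region := qpt -> Prop.

Definition emb (v : lpt) : qpt := (v.1%:~R, v.2%:~R).
Definition qadd (x y : qpt) : qpt := (x.1 + y.1, x.2 + y.2).
Definition qscale (k : rat) (x : qpt) : qpt := (k * x.1, k * x.2).

Definition in_hull (s : seq qpt) (x : qpt) : Prop :=
  exists c : seq rat,
    size c = size s /\ all (fun t => 0 <= t) c /\ \sum_(t <- c) t = 1 /\
    x = (\sum_(i < size s) c`_i * (nth (0, 0) s i).1,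
         \sum_(i < size s) c`_i * (nth (0, 0) s i).2).

Definition conv (A : region) : region :=
  fun x => exists s : seq qpt, (forall y, y \in s -> A y) /\ in_hull s x.

Definition conv_pts (s : seq lpt) : region := in_hull (map emb s).

Definition msum (A B : region) : region :=
  fun x => exists a b, A a /\ B b /\ x = qadd a b.
Definition dil (k : rat) (A : region) : region :=
  fun x => exists a, A a /\ x = qscale k a.
Definition subset_r (A B : region) : Prop := forall x, A x -> B x.

Definition primitive (v : lpt) : Prop := gcdz v.1 v.2 = 1.

(* pairing M x N_Q -> Q, and M x N -> Z *)
Definition pairing (w : lpt) (x : qpt) : rat := w.1%:~R * x.1 + w.2%:~R * x.2.
Definition wval (w v : lpt) : int := w.1 * v.1 + w.2 * v.2.

Definition is_lattice (x : qpt) : Prop := exists v : lpt, x = emb v.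

Definition slice (P : region) (w : lpt) (h : int) : region :=
  conv (fun x => P x /\ is_lattice x /\ pairing w x = h%:~R).

Definition triangle (v0 v1 v2 : lpt) : region := conv_pts [:: v0; v1; v2].

Definition origin_interior (P : region) : Prop :=
  exists e : rat, 0 < e /\
    forall x : qpt, `|x.1| <= e -> `|x.2| <= e -> P x.

(* Fano triangle with vertices v0 v1 v2 (interiority forces these to be the
   three vertices of the triangle) *)
Definition fano_triangle (v0 v1 v2 : lpt) : Prop :=
  [/\ primitive v0, primitive v1, primitive v2 &
      origin_interior (triangle v0 v1 v2)].

(* weights of the fake weighted projective plane X_P, P = conv(v0,v1,v2) *)
Definition weights (v0 v1 v2 : lpt) (l0 l1 l2 : nat) : Prop :=
  [/\ (0 < l0)%N, (0 < l1)%N, (0 < l2)%N & gcdn l0 (gcdn l1 l2) = 1%N] /\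
  l0%:Z * v0.1 + l1%:Z * v1.1 + l2%:Z * v2.1 = 0 /\
  l0%:Z * v0.2 + l1%:Z * v1.2 + l2%:Z * v2.2 = 0.

Definition lin_img (a b c d : int) (A : region) : region :=
  fun x => exists y, A y /\
    x = (a%:~R * y.1 + b%:~R * y.2, c%:~R * y.1 + d%:~R * y.2).
Definition iso (P Q : region) : Prop :=
  exists a b c d : int, (a * d - b * c = 1 \/ a * d - b * c = -1) /\
    forall x, lin_img a b c d P x <-> Q x.

(* h_min and h_max of w on the triangle conv(v0,v1,v2) (attained at vertices) *)
Definition hmin (w v0 v1 v2 : lpt) : int :=
  Num.min (wval w v0) (Num.min (wval w v1) (wval w v2)).
Definition hmax (w v0 v1 v2 : lpt) : int :=
  Num.max (wval w v0) (Num.max (wval w v1) (wval w v2)).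

(* F = conv_pts sF is a factor of P = conv(v0,v1,v2) w.r.t. w, with the
   lattice polytopes G_h = conv_pts (G h) as witnesses *)
Definition factor_with (v0 v1 v2 w : lpt) (sF : seq lpt) (G : int -> seq lpt)
  : Prop :=
  sF != [::] /\ (forall f, f \in sF -> wval w f = 0) /\
  forall h : int, hmin w v0 v1 v2 <= h < 0 ->
    [/\ (forall g, g \in G h -> wval w g = h),
        (forall v, v \in [:: v0; v1; v2] -> wval w v = h ->
           msum (conv_pts (G h)) (dil (- h%:~R) (conv_pts sF)) (emb v)) &
        subset_r (msum (conv_pts (G h)) (dil (- h%:~R) (conv_pts sF)))
                 (slice (triangle v0 v1 v2) w h)].

Definition mutation (v0 v1 v2 w : lpt) (sF : seq lpt) (G : int -> seq lpt)
  : region :=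
  conv (fun x =>
    (exists h : int, hmin w v0 v1 v2 <= h < 0 /\ conv_pts (G h) x) \/
    (exists h : int, 0 <= h <= hmax w v0 v1 v2 /\
       msum (slice (triangle v0 v1 v2) w h) (dil h%:~R (conv_pts sF)) x)).

(* the factor is not a single point (otherwise the mutation is trivial) *)
Definition nontrivial (sF : seq lpt) : Prop :=
  exists f1 f2, [/\ f1 \in sF, f2 \in sF & f1 != f2].

Definition one_step_mutation (v0 v1 v2 u0 u1 u2 : lpt) : Prop :=
  exists (w : lpt) (sF : seq lpt) (G : int -> seq lpt),
    [/\ primitive w, factor_with v0 v1 v2 w sF G, nontrivial sF &
        iso (mutation v0 v1 v2 w sF G) (triangle u0 u1 u2)].

(* Main.v *)
Require Import Defs.
From HB Require Import structures.
From mathcomp Require Import all_boot all_order all_algebra.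
From mathcomp Require Import ring lra zify.
From Stdlib Require Import FunctionalExtensionality PropExtensionality.
Set Implicit Arguments. Unset Strict Implicit. Unset Printing Implicit Defensive.
Import Order.TTheory GRing.Theory Num.Theory.


Section Aux.
Local Open Scope ring_scope.

Definition affine (phi : qpt -> rat) : Prop :=
  exists a b k : rat, forall z, phi z = a * z.1 + b * z.2 + k.

Lemma hull_bound (phi : qpt -> rat) s x :
  affine phi -> in_hull s x -> (forall y, y \in s -> 0 <= phi y) -> 0 <= phi x.
Proof.
move=> [a [b [k Hphi]]] [c [Hsz [Hc [Hs1 ->]]]] Hy.
have Hs : \sum_(i < size s) c`_i = 1.
  by rewrite -Hsz -Hs1 (big_nth 0) big_mkord.
have -> : phi (\sum_(i < size s) c`_i * (nth (0, 0) s i).1,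
               \sum_(i < size s) c`_i * (nth (0, 0) s i).2)
   = \sum_(i < size s) c`_i * phi (nth (0,0) s i).
  rewrite Hphi /= !mulr_sumr -[k]mulr1 -Hs mulr_sumr -!big_split /=.
  by apply: eq_bigr => i _; rewrite Hphi; ring.
apply: sumr_ge0 => i _; apply: mulr_ge0.
  by move/all_nthP: Hc; apply; rewrite Hsz.
by apply: Hy; apply: mem_nth.
Qed.

End Aux.


Section Aux2.
Local Open Scope ring_scope.

Lemma conv_bound (phi : qpt -> rat) (A : region) x :
  affine phi -> conv A x -> (forall y, A y -> 0 <= phi y) -> 0 <= phi x.
Proof.
move=> Ha [s [Hs Hx]] Hy; apply: (hull_bound Ha Hx) => y /Hs; exact: Hy.
Qed.

Lemma affine_cst k : affine (fun _ => k).
Proof. by exists 0, 0, k => z; ring. Qed.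
Lemma affine_pair (w : lpt) : affine (pairing w).
Proof. by exists w.1%:~R, w.2%:~R, 0 => z; rewrite /pairing; ring. Qed.
Lemma affine_add f g : affine f -> affine g -> affine (fun z => f z + g z).
Proof.
move=> [a [b [k H]]] [a' [b' [k' H']]]; exists (a + a'), (b + b'), (k + k') => z.
by rewrite H H'; ring.
Qed.
Lemma affine_scale c f : affine f -> affine (fun z => c * f z).
Proof. move=> [a [b [k H]]]; exists (c * a), (c * b), (c * k) => z; rewrite H; ring. Qed.
Lemma affine_opp f : affine f -> affine (fun z => - f z).
Proof. move=> [a [b [k H]]]; exists (- a), (- b), (- k) => z; rewrite H; ring. Qed.
Lemma affine_sub f g : affine f -> affine g -> affine (fun z => f z - g z).
Proof. by move=> Hf Hg; apply: affine_add => //; apply: affine_opp. Qed.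

Lemma hull_eq (phi : qpt -> rat) s x :
  affine phi -> in_hull s x -> (forall y, y \in s -> phi y = 0) -> phi x = 0.
Proof.
move=> Ha Hx Hy; apply/eqP; rewrite eq_le; apply/andP; split.
  rewrite -oppr_ge0; apply: (hull_bound (affine_opp Ha) Hx) => y /Hy ->.
  by rewrite oppr0.
by apply: (hull_bound Ha Hx) => y /Hy ->.
Qed.

Lemma conv_eq (phi : qpt -> rat) (A : region) x :
  affine phi -> conv A x -> (forall y, A y -> phi y = 0) -> phi x = 0.
Proof.
move=> Ha [s [Hs Hx]] Hy; apply: (hull_eq Ha Hx) => y /Hs; exact: Hy.
Qed.

Lemma hull_mem s y : y \in s -> in_hull s y.
Proof.
move=> Hy; set j := index y s.
have Hj : (j < size s)%N by rewrite index_mem.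
exists [seq (i == j)%:R | i <- iota 0 (size s)].
rewrite size_map size_iota; split=> //; split.
  by apply/allP => t /mapP [i _ ->]; rewrite ler0n.
have Hn : forall i : nat, (i < size s)%N ->
   [seq (i == j)%:R | i <- iota 0 (size s)]`_i = (i == j)%:R :> rat.
  by move=> i Hi; rewrite (nth_map 0%N) ?size_iota // nth_iota.
split.
  rewrite (big_nth 0) big_mkord size_map size_iota (bigD1 (Ordinal Hj)) //=.
  rewrite (Hn j Hj) eqxx big1 ?addr0 //.
  move=> i /eqP Hi; rewrite (Hn _ (ltn_ord i)); case: eqP => //= Hij.
  by case: Hi; apply: val_inj.
rewrite (bigD1 (Ordinal Hj)) // [X in (_, X)](bigD1 (Ordinal Hj)) //=.
rewrite !(Hn j Hj) /= eqxx !mul1r !big1 ?addr0 ?nth_index //.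
  by case: y Hy {Hj Hn j}.
all: move=> i /eqP Hi; rewrite (Hn _ (ltn_ord i)); case: eqP => [Hij|_]; last by rewrite mul0r.
all: by case: Hi; apply: val_inj.
Qed.

Lemma in_hull3 a b c x :
  in_hull [:: a; b; c] x <->
  exists c0 c1 c2 : rat, [/\ 0 <= c0, 0 <= c1, 0 <= c2, c0 + c1 + c2 = 1 &
    x = (c0 * a.1 + c1 * b.1 + c2 * c.1, c0 * a.2 + c1 * b.2 + c2 * c.2)].
Proof.
split.
  move=> [cs [Hsz [Hc [Hs ->]]]].
  case: cs Hsz Hc Hs => [|c0 [|c1 [|c2 [|? ?]]]] //= _.
  rewrite !big_cons big_nil /= => /and4P [h0 h1 h2 _] Hs.
  exists c0, c1, c2; split; [exact h0|exact h1|exact h2|by rewrite -Hs; ring|].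
  by rewrite !big_ord_recr !big_ord0 /=; congr pair; ring.
move=> [c0 [c1 [c2 [h0 h1 h2 Hs ->]]]].
exists [:: c0; c1; c2]; split => //; split; first by rewrite /= h0 h1 h2.
split; first by rewrite !big_cons big_nil -Hs; ring.
by rewrite !big_ord_recr !big_ord0 /=; congr pair; ring.
Qed.

End Aux2.


Section Aux3.
Local Open Scope ring_scope.

Lemma pairing_emb w v : pairing w (emb v) = (wval w v)%:~R.
Proof. by rewrite /pairing /wval /emb /= intrD !intrM. Qed.

Lemma box_lin (P : region) (a b : rat) : origin_interior P ->
  (forall x, P x -> 0 <= a * x.1 + b * x.2) -> a = 0 /\ b = 0.
Proof.
move=> [e [He HP]] H.
have He' : 0 <= e := ltW He.
have Hn : `|0 : rat| <= e by rewrite normr0.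
have Hp : `|e| <= e by rewrite ger0_norm.
have Hm : `|- e| <= e by rewrite normrN ger0_norm.
have h1 := H (e, 0) (HP (e, 0) Hp Hn).
have h2 := H (- e, 0) (HP (- e, 0) Hm Hn).
have h3 := H (0, e) (HP (0, e) Hn Hp).
have h4 := H (0, - e) (HP (0, - e) Hn Hm).
rewrite /= !mulr0 ?addr0 ?add0r in h1 h2 h3 h4.
split; nra.
Qed.

Lemma box_aff (P : region) (a b k : rat) : origin_interior P ->
  (forall x, P x -> a * x.1 + b * x.2 + k = 0) -> [/\ a = 0, b = 0 & k = 0].
Proof.
move=> HO H.
have Hk : k = 0.
  move: HO => [e [He HP]]; have He' : 0 <= e := ltW He.
  have : `|0 : rat| <= e by rewrite normr0.
  by move=> /(HP (0,0)) /(_ _) /H; rewrite /= !mulr0 !add0r; apply.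
have [] := @box_lin P a b HO.
  by move=> x /H; rewrite Hk addr0 => ->.
by [].
Qed.

Lemma prim_nz w : primitive w -> w.1 != 0 \/ w.2 != 0.
Proof.
rewrite /primitive; case: w => [w1 w2] /= Hg.
case: (w1 =P 0) => [E1|]; last by left; apply/eqP.
case: (w2 =P 0) => [E2|]; last by right; apply/eqP.
by move: Hg; rewrite E1 E2.
Qed.

Lemma fano_signs v0 v1 v2 w : fano_triangle v0 v1 v2 -> primitive w ->
  ~ (0 <= wval w v0 /\ 0 <= wval w v1 /\ 0 <= wval w v2)%R /\
  ~ (wval w v0 <= 0 /\ wval w v1 <= 0 /\ wval w v2 <= 0)%R.
Proof.
move=> [_ _ _ HO] /prim_nz Hw.
have key : forall s : rat, s != 0 ->
   ~ (forall x, triangle v0 v1 v2 x -> 0 <= s * pairing w x).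
  move=> s Hs Hx.
  have Hp : forall x, triangle v0 v1 v2 x -> 0 <= (s * w.1%:~R) * x.1 + (s * w.2%:~R) * x.2.
    by move=> x /Hx; rewrite /pairing; congr (_ <= _); ring.
  have [h1 h2] := box_lin HO Hp.
  move/eqP: h1; move/eqP: h2; rewrite !mulf_eq0 (negbTE Hs) /= !intr_eq0.
  by case: Hw => /negbTE -> .
split.
  move=> [h0 [h1 h2]]; apply: (key 1 (oner_neq0 _)) => x Hx.
  rewrite mul1r; apply: (hull_bound (affine_pair w) Hx).
  by move=> y; rewrite !inE => /or3P [] /eqP ->; rewrite pairing_emb ler0z.
move=> [h0 [h1 h2]]; apply: (key (-1)); first by rewrite oppr_eq0 oner_neq0.
move=> x Hx; rewrite mulN1r oppr_ge0.
rewrite -subr_ge0 sub0r; apply: (hull_bound (affine_opp (affine_pair w)) Hx).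
by move=> y; rewrite !inE => /or3P [] /eqP ->; rewrite pairing_emb oppr_ge0 lerz0.
Qed.

End Aux3.


Section Aux4.
Local Open Scope ring_scope.

Lemma affine_lin a b k : affine (fun z : qpt => a * z.1 + b * z.2 + k).
Proof. by exists a, b, k. Qed.

Lemma tri_vert_aff (phi : qpt -> rat) v0 v1 v2 x : affine phi -> triangle v0 v1 v2 x ->
  phi (emb v0) = 0 -> phi (emb v1) = 0 -> phi (emb v2) = 0 -> phi x = 0.
Proof.
move=> Ha Hx h0 h1 h2; apply: (hull_eq Ha Hx).
by move=> y; rewrite !inE => /or3P [] /eqP ->.
Qed.

Lemma fano_v12 v0 v1 v2 : fano_triangle v0 v1 v2 -> v1 <> v2.
Proof.
move=> [_ _ _ HO] E; subst v2.
pose n1 : rat := (v1.2 - v0.2)%:~R; pose n2 : rat := (v0.1 - v1.1)%:~R.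
pose k : rat := - (n1 * (v0.1)%:~R + n2 * (v0.2)%:~R).
have Hphi : forall x, triangle v0 v1 v1 x -> n1 * x.1 + n2 * x.2 + k = 0.
  move=> x Hx; have := tri_vert_aff (affine_lin n1 n2 k) Hx; apply;
   rewrite /k /n1 /n2 /emb /= ?intrB; ring.
have [e1 e2 _] := box_aff HO Hphi.
have E : v0 = v1.
  move/eqP: e1; move/eqP: e2; rewrite /n1 /n2 !intr_eq0 !subr_eq0.
  by move=> /eqP h2 /eqP h1; apply: injective_projections.
subst v1.
have Hpsi : forall x, triangle v0 v0 v0 x -> 1 * x.1 + 0 * x.2 + (- (v0.1)%:~R) = 0.
  move=> x Hx; have := tri_vert_aff (affine_lin 1 0 (- (v0.1)%:~R)) Hx; apply;
   rewrite /emb /=; ring.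
have [h _ _] := box_aff HO Hpsi.
by move/eqP: h; rewrite oner_eq0.
Qed.

Lemma indep (w d : lpt) (x y : qpt) : primitive w -> d <> (0, 0) -> wval w d = 0 ->
  pairing w x = pairing w y -> pairing d x = pairing d y -> x = y.
Proof.
move=> /prim_nz Hw Hd Hwd.
case: x => x1 x2; case: y => y1 y2; case: w Hw Hwd => w1 w2; case: d Hd => d1 d2.
rewrite /pairing /wval /= => Hd Hw Hwd E1 E2.
have Hs : w1 * w1 + w2 * w2 != 0.
  case: Hw => Hw.
    by apply: lt0r_neq0; apply: ltr_pwDl; rewrite ?sqr_ge0 // lt0r sqr_ge0 mulf_neq0.
  by apply: lt0r_neq0; apply: ltr_pwDr; rewrite ?sqr_ge0 // lt0r sqr_ge0 mulf_neq0.
have Hdet : w1 * d2 - w2 * d1 != 0.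
  apply/eqP => Hdet; apply: Hd.
  have h1 : d1 * (w1 * w1 + w2 * w2) = 0.
    have -> : d1 * (w1 * w1 + w2 * w2) = w1 * (w1*d1+w2*d2) - w2*(w1*d2 - w2*d1) by ring.
    by rewrite Hwd Hdet; ring.
  have h2 : d2 * (w1 * w1 + w2 * w2) = 0.
    have -> : d2 * (w1 * w1 + w2 * w2) = w2 * (w1*d1+w2*d2) + w1*(w1*d2 - w2*d1) by ring.
    by rewrite Hwd Hdet; ring.
  move/eqP: h1; move/eqP: h2; rewrite !mulf_eq0 (negbTE Hs) !orbF => /eqP -> /eqP ->.
  by [].
have Hq : ((w1 * d2 - w2 * d1)%:~R : rat) != 0 by rewrite intr_eq0.
rewrite intrB !intrM in Hq.
congr pair; apply: (mulIf Hq); apply/eqP; rewrite -subr_eq0; apply/eqP.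
  transitivity ((d2%:~R) * ((w1%:~R * x1 + w2%:~R * x2) - (w1%:~R * y1 + w2%:~R * y2))
     - (w2%:~R) * ((d1%:~R * x1 + d2%:~R * x2) - (d1%:~R * y1 + d2%:~R * y2))); first ring.
  by rewrite E1 E2 !subrr; ring.
transitivity ((w1%:~R) * ((d1%:~R * x1 + d2%:~R * x2) - (d1%:~R * y1 + d2%:~R * y2))
   - (d1%:~R) * ((w1%:~R * x1 + w2%:~R * x2) - (w1%:~R * y1 + w2%:~R * y2))); first ring.
by rewrite E1 E2 !subrr; ring.
Qed.

End Aux4.


Section Aux5.
Local Open Scope ring_scope.

Definition exposed (R : region) (Y : qpt) : Prop :=
  R Y /\ exists phi, [/\ affine phi, phi Y = 0, (forall z, R z -> phi z <= 0) &
                        (forall z, R z -> phi z = 0 -> z = Y)].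

Lemma exposed_tri u0 u1 u2 Y : exposed (triangle u0 u1 u2) Y ->
  [\/ Y = emb u0, Y = emb u1 | Y = emb u2].
Proof.
move=> [HY [phi [[a [b [k Ha]]] H0 Hle Heq]]].
have Hm : forall u, u \in [:: u0; u1; u2] -> triangle u0 u1 u2 (emb u).
  by move=> u Hu; apply: hull_mem; apply: map_f.
have T0 := Hm u0 (mem_head _ _).
have T1 : triangle u0 u1 u2 (emb u1) by apply: Hm; rewrite !inE eqxx orbT.
have T2 : triangle u0 u1 u2 (emb u2) by apply: Hm; rewrite !inE eqxx !orbT.
case: (phi (emb u0) =P 0) => [E|N0]; first by constructor 1; symmetry; apply: Heq.
case: (phi (emb u1) =P 0) => [E|N1]; first by constructor 2; symmetry; apply: Heq.
case: (phi (emb u2) =P 0) => [E|N2]; first by constructor 3; symmetry; apply: Heq.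
exfalso.
have L0 : phi (emb u0) < 0 by rewrite lt_neqAle Hle // andbT; apply/eqP.
have L1 : phi (emb u1) < 0 by rewrite lt_neqAle Hle // andbT; apply/eqP.
have L2 : phi (emb u2) < 0 by rewrite lt_neqAle Hle // andbT; apply/eqP.
move: HY => /in_hull3 [c0 [c1 [c2 [h0 h1 h2 Hs EY]]]].
move: H0 L0 L1 L2; rewrite !Ha EY /= => H0 L0 L1 L2.
have : a * (c0 * (emb u0).1 + c1 * (emb u1).1 + c2 * (emb u2).1) +
       b * (c0 * (emb u0).2 + c1 * (emb u1).2 + c2 * (emb u2).2) + k =
       c0 * (a * (emb u0).1 + b * (emb u0).2 + k) + c1 * (a * (emb u1).1 + b * (emb u1).2 + k)
       + c2 * (a * (emb u2).1 + b * (emb u2).2 + k).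
  by rewrite -[k in LHS]mul1r -Hs; ring.
rewrite H0; move: L0 L1 L2.
set p0 := a * (emb u0).1 + b * (emb u0).2 + k.
set p1 := a * (emb u1).1 + b * (emb u1).2 + k.
set p2 := a * (emb u2).1 + b * (emb u2).2 + k.
move=> L0 L1 L2 E.
have q0 : c0 * p0 <= 0 := mulr_ge0_le0 h0 (ltW L0).
have q1 : c1 * p1 <= 0 := mulr_ge0_le0 h1 (ltW L1).
have q2 : c2 * p2 <= 0 := mulr_ge0_le0 h2 (ltW L2).
have z0 : c0 * p0 = 0 by lra.
have z1 : c1 * p1 = 0 by lra.
have z2 : c2 * p2 = 0 by lra.
move/eqP: z0; rewrite mulf_eq0 (negbTE (ltr0_neq0 L0)) orbF => /eqP z0.
move/eqP: z1; rewrite mulf_eq0 (negbTE (ltr0_neq0 L1)) orbF => /eqP z1.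
move/eqP: z2; rewrite mulf_eq0 (negbTE (ltr0_neq0 L2)) orbF => /eqP z2.
by move: Hs; rewrite z0 z1 z2 !addr0 => /eqP; rewrite eq_sym oner_eq0.
Qed.

Definition lmap (a b c d : int) (y : qpt) : qpt :=
  (a%:~R * y.1 + b%:~R * y.2, c%:~R * y.1 + d%:~R * y.2).

Lemma lmap_inj a b c d x y : a * d - b * c != 0 -> lmap a b c d x = lmap a b c d y -> x = y.
Proof.
move=> Hd; have Hq : (a%:~R * d%:~R - b%:~R * c%:~R : rat) != 0.
  by rewrite -!intrM -intrB intr_eq0.
case: x => x1 x2; case: y => y1 y2; rewrite /lmap /= => [[E1 E2]].
congr pair; apply: (mulIf Hq); apply/eqP; rewrite -subr_eq0; apply/eqP.
  transitivity (d%:~R * (a%:~R * x1 + b%:~R * x2 - (a%:~R * y1 + b%:~R * y2))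
     - b%:~R * (c%:~R * x1 + d%:~R * x2 - (c%:~R * y1 + d%:~R * y2)) : rat); first ring.
  by rewrite E1 E2 !subrr; ring.
transitivity (a%:~R * (c%:~R * x1 + d%:~R * x2 - (c%:~R * y1 + d%:~R * y2))
   - c%:~R * (a%:~R * x1 + b%:~R * x2 - (a%:~R * y1 + b%:~R * y2)) : rat); first ring.
by rewrite E1 E2 !subrr; ring.
Qed.

Lemma exposed_lin a b c d (M T : region) X : a * d - b * c != 0 ->
  (forall x, lin_img a b c d M x <-> T x) -> exposed M X -> exposed T (lmap a b c d X).
Proof.
move=> Hd HT [HX [phi [[p [q [k Hphi]]] H0 Hle Heq]]].
have Hq : (a%:~R * d%:~R - b%:~R * c%:~R : rat) != 0.
  by rewrite -!intrM -intrB intr_eq0.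
set D := (a%:~R * d%:~R - b%:~R * c%:~R : rat) in Hq.
pose inv (z : qpt) : qpt := ((d%:~R * z.1 - b%:~R * z.2) / D, (- c%:~R * z.1 + a%:~R * z.2) / D).
have Hinv : forall y, inv (lmap a b c d y) = y.
  by move=> [y1 y2]; rewrite /inv /lmap /D /=; congr pair; field.
have HTz : forall z, T z -> exists y, M y /\ z = lmap a b c d y.
  by move=> z /HT [y [My ->]]; exists y.
split; first by apply/HT; exists X.
exists (fun z => phi (inv z)); split.
- exists ((p * d%:~R - q * c%:~R) / D), ((- p * b%:~R + q * a%:~R) / D), k => z.
  by rewrite Hphi /inv /D /=; field.
- by rewrite Hinv.
- by move=> z /HTz [y [My ->]]; rewrite Hinv; apply: Hle.
- by move=> z /HTz [y [My ->]]; rewrite Hinv => /(Heq _ My) ->.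
Qed.

Lemma lin_img_in a b c d (M T : region) x : (forall x, lin_img a b c d M x <-> T x) ->
  M x -> T (lmap a b c d x).
Proof. by move=> HT Mx; apply/HT; exists x. Qed.

End Aux5.


Section Aux6.
Local Open Scope ring_scope.

Lemma wf_coprime v0 v1 v2 l0 l1 l2 :
  weights v0 v1 v2 l0 l1 l2 -> primitive v0 -> coprime l1 l2.
Proof.
move=> [[_ _ _ Hg] [E1 E2]] Hp.
set d := gcdn l1 l2.
have cd : coprimez d%:Z l0%:Z by rewrite coprimezE /= coprime_sym /coprime Hg.
have [q1 Hq1] : exists q, l1%:Z = q * d%:Z.
  by apply/dvdzP; rewrite dvdzE /= dvdn_gcdl.
have [q2 Hq2] : exists q, l2%:Z = q * d%:Z.
  by apply/dvdzP; rewrite dvdzE /= dvdn_gcdr.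
have key : forall a b c : int, l0%:Z * a + l1%:Z * b + l2%:Z * c = 0 -> (d%:Z %| a)%Z.
  move=> a b c E.
  have : (d%:Z %| a * l0%:Z)%Z.
    apply/dvdzP; exists (- (q1 * b + q2 * c)).
    have -> : a * l0%:Z = - (l1%:Z * b + l2%:Z * c).
      by apply/eqP; rewrite -subr_eq0 -E; apply/eqP; ring.
    by rewrite Hq1 Hq2; ring.
  by rewrite Gauss_dvdzl.
have h1 := key _ _ _ E1; have h2 := key _ _ _ E2.
have : (d%:Z %| gcdz v0.1 v0.2)%Z by rewrite dvdz_gcd h1 h2.
rewrite Hp dvdz1 /= => /eqP Hd; by rewrite /coprime -/d Hd.
Qed.

Lemma final_nt (l0 l1 l2 x y z : nat) :
  (0 < l0)%N -> (0 < l1)%N -> (0 < l2)%N -> (0 < x)%N -> (0 < y)%N ->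
  coprime l1 l2 -> coprime y z ->
  (x * (l0 * l1) = (l1 + l2) ^ 2 * y)%N -> (x * (l0 * l2) = (l1 + l2) ^ 2 * z)%N ->
  [/\ y = l1, z = l2, (l0 %| (l1 + l2) ^ 2)%N & ((l1 + l2) ^ 2 %/ l0)%N = x].
Proof.
move=> p0 p1 p2 px py c12 cyz Ey Ez.
have Hyz : (l1 * z = l2 * y)%N.
  have : (x * l0 * (l1 * z) = x * l0 * (l2 * y))%N.
    rewrite !mulnA -(mulnA x l0 l1) Ey -(mulnA x l0 l2) Ez.
    by rewrite mulnC mulnA (mulnC z) mulnC !mulnA.
  by move/eqP; rewrite eqn_mul2l muln_eq0 (gtn_eqF px) (gtn_eqF p0) /= => /eqP.
have d1 : (y %| l1)%N.
  by rewrite -(Gauss_dvdl _ cyz) Hyz dvdn_mull.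
have d2 : (l1 %| y)%N.
  by rewrite -(Gauss_dvdl _ c12) mulnC -Hyz dvdn_mulr.
have Ey1 : y = l1 by apply/eqP; rewrite eqn_dvd d1 d2.
subst y.
have Ez2 : z = l2.
  by apply/eqP; rewrite -(eqn_pmul2l p1) Hyz mulnC.
have Ex : (x * l0 = (l1 + l2) ^ 2)%N.
  by apply/eqP; rewrite -(eqn_pmul2r p1) -mulnA Ey.
split => //; first by rewrite -Ex dvdn_mull.
by rewrite -Ex mulnK.
Qed.

End Aux6.


Section Aux7.
Local Open Scope ring_scope.

Lemma pairing_qadd w x y : pairing w (qadd x y) = pairing w x + pairing w y.
Proof. by rewrite /pairing /qadd /=; ring. Qed.
Lemma pairing_qscale w k x : pairing w (qscale k x) = k * pairing w x.
Proof. by rewrite /pairing /qscale /=; ring. Qed.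

Lemma affine_ext f g : (forall x, f x = g x) -> affine g -> affine f.
Proof. by move=> E [a [b [k H]]]; exists a, b, k => z; rewrite E H. Qed.

Lemma affine_pp (w d : lpt) c1 c2 c3 :
  affine (fun x => c1 * pairing w x + c2 * pairing d x + c3).
Proof.
exists (c1 * w.1%:~R + c2 * d.1%:~R), (c1 * w.2%:~R + c2 * d.2%:~R), c3 => z.
by rewrite /pairing; ring.
Qed.

Lemma seq_argmin (T : eqType) (f : T -> rat) (s : seq T) : s != [::] ->
  exists2 x, x \in s & forall y, y \in s -> f x <= f y.
Proof.
elim: s => [//|a s IH] _.
case: s IH => [|b s] IH.
  by exists a => [|y]; rewrite ?inE ?eqxx // => /eqP ->.
have [x Hx Hm] := IH isT.
case: (leP (f a) (f x)) => H.
  exists a; first exact: mem_head.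
  move=> y; rewrite inE => /orP [/eqP ->//|/Hm]; exact: le_trans.
exists x; first by rewrite inE Hx orbT.
move=> y; rewrite inE => /orP [/eqP ->|/Hm //]; exact: ltW.
Qed.

Lemma seq_argmax (T : eqType) (f : T -> rat) (s : seq T) : s != [::] ->
  exists2 x, x \in s & forall y, y \in s -> f y <= f x.
Proof.
move=> /(seq_argmin (fun t => - f t)) [x Hx Hm]; exists x => // y /Hm.
by rewrite lerN2.
Qed.

Lemma conv_in (A : region) x : A x -> conv A x.
Proof.
move=> Ax; exists [:: x]; split; first by move=> y; rewrite inE => /eqP ->.
by apply: hull_mem; rewrite mem_head.
Qed.

Lemma conv_pts_mem s v : v \in s -> conv_pts s (emb v).
Proof. by move=> Hv; apply: hull_mem; apply: map_f. Qed.

Lemma conv_pts_eq (phi : qpt -> rat) s x : affine phi -> conv_pts s x ->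
  (forall v, v \in s -> phi (emb v) = 0) -> phi x = 0.
Proof.
move=> Ha Hx H; apply: (hull_eq Ha Hx) => y /mapP [v Hv ->]; exact: H.
Qed.

Lemma conv_pts_bound (phi : qpt -> rat) s x : affine phi -> conv_pts s x ->
  (forall v, v \in s -> 0 <= phi (emb v)) -> 0 <= phi x.
Proof.
move=> Ha Hx H; apply: (hull_bound Ha Hx) => y /mapP [v Hv ->]; exact: H.
Qed.

End Aux7.

Section Aux7b.
Local Open Scope ring_scope.
Lemma exposed_of (M : region) (s1 s2 : qpt -> rat) X :
  affine s1 -> affine s2 -> (forall z, M z -> 0 <= s1 z) -> (forall z, M z -> 0 <= s2 z) ->
  M X -> s1 X = 0 -> s2 X = 0 -> (forall z, M z -> s1 z = 0 -> s2 z = 0 -> z = X) ->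
  exposed M X.
Proof.
move=> A1 A2 H1 H2 MX E1 E2 U; split => //.
exists (fun z => - (s1 z + s2 z)); split.
- by apply: affine_opp; apply: affine_add.
- by rewrite E1 E2 addr0 oppr0.
- move=> z Mz; rewrite oppr_le0; apply: addr_ge0; [exact: H1|exact: H2].
- move=> z Mz E; have h1 := H1 z Mz; have h2 := H2 z Mz.
  apply: U => //; lra.
Qed.

Definition ptA (v f : lpt) (r : int) : qpt := qadd (emb v) (qscale (- r%:~R) (emb f)).
Definition ptC (v f : lpt) (h : int) : qpt := qadd (emb v) (qscale h%:~R (emb f)).
Definition det2 (x y : qpt) : rat := x.1 * y.2 - x.2 * y.1.
Lemma sqsum_pos (a b : int) : (a, b) <> (0, 0) -> 0 < a * a + b * b.
Proof.
move=> Hab; case: (a =P 0) => [Ea|/eqP Na].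
  case: (b =P 0) => [Eb|/eqP Nb]; first by case: Hab; rewrite Ea Eb.
  by rewrite Ea mul0r add0r lt0r sqr_ge0 mulf_neq0.
by apply: ltr_pwDl; rewrite ?sqr_ge0 // lt0r sqr_ge0 mulf_neq0.
Qed.
End Aux7b.


Section Aux8.
Local Open Scope ring_scope.
Lemma subr_ge0_ (a b : rat) : a <= b -> 0 <= b - a.
Proof. by rewrite subr_ge0. Qed.

Lemma geom v0 v1 v2 w sF G :
  fano_triangle v0 v1 v2 -> primitive w -> factor_with v0 v1 v2 w sF G -> nontrivial sF ->
  wval w v1 = wval w v2 -> wval w v1 < wval w v0 ->
  exists (fa fb : lpt) (r h : int),
   let M := mutation v0 v1 v2 w sF G in
   [/\ (wval w fa = 0 /\ wval w fb = 0), (r = - wval w v1 /\ h = wval w v0), (0 < r /\ 0 < h),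
     (exposed M (ptA v1 fa r) /\ exposed M (ptA v2 fb r)) /\
     (exposed M (ptC v0 fa h) /\ exposed M (ptC v0 fb h)) &
     [/\ ptA v1 fa r <> ptC v0 fa h, ptA v1 fa r <> ptC v0 fb h,
         ptA v2 fb r <> ptC v0 fa h, ptA v2 fb r <> ptC v0 fb h &
         (ptC v0 fa h <> ptC v0 fb h /\ det2 (ptC v0 fa h) (ptC v0 fb h) != 0)]].
Proof.
move=> Hfano Hw [HsF [Hf0 HG]] [f1 [f2 [Hf1 Hf2 Hf12]]] E12 Hlt.
have Hmin : hmin w v0 v1 v2 = wval w v1.
  by rewrite /hmin -E12 minxx min_r // ltW.
have Hmax : hmax w v0 v1 v2 = wval w v0.
  by rewrite /hmax -E12 maxxx max_l // ltW.
have [Hs1 Hs2] := fano_signs Hfano Hw.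
have Hneg : wval w v1 < 0.
  case: (ltP (wval w v1) 0) => // Hc; exfalso; apply: Hs1; rewrite -E12.
  by split; [apply: ltW; apply: le_lt_trans Hlt|].
have Hpos : 0 < wval w v0.
  case: (ltP 0 (wval w v0)) => // Hc; exfalso; apply: Hs2; rewrite -E12.
  by split => //; split; apply: ltW; apply: lt_le_trans Hc.
set r := - wval w v1; set h := wval w v0.
have Hr : 0 < r by rewrite /r oppr_gt0.
pose R : rat := r%:~R; pose H : rat := h%:~R.
have HR : 0 < R by rewrite /R ltr0z.
have HH : 0 < H by rewrite /H ltr0z.
pose d : lpt := (v2.1 - v1.1, v2.2 - v1.2).
have Hd0 : d <> (0, 0).
  move=> [E1 E2]; apply: (fano_v12 Hfano); apply: injective_projections; apply/eqP.
    by rewrite eq_sym -subr_eq0 E1.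
  by rewrite eq_sym -subr_eq0 E2.
have Hwd : wval w d = 0.
  transitivity (wval w v2 - wval w v1); first by rewrite /wval /d /=; ring.
  by rewrite E12 subrr.
have Hind : forall x y, pairing w x = pairing w y -> pairing d x = pairing d y -> x = y.
  by move=> x y; apply: indep.
pose p0 := pairing d (emb v0); pose p1 := pairing d (emb v1); pose p2 := pairing d (emb v2).
have Hp12 : p1 < p2.
  rewrite -subr_gt0.
  have -> : p2 - p1 = (d.1 * d.1 + d.2 * d.2)%:~R.
    rewrite /p1 /p2 !pairing_emb -intrB; congr intmul.
    by rewrite /wval /d /=; ring.
  by rewrite ltr0z; apply: sqsum_pos; exact: Hd0.
have hv0 : pairing w (emb v0) = H by rewrite pairing_emb.
have hv1 : pairing w (emb v1) = - R by rewrite pairing_emb /R /r intrN opprK.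
have hv2 : pairing w (emb v2) = - R by rewrite pairing_emb -E12 /R /r intrN opprK.
have [fa Hfa Hfamin] := seq_argmin (fun f => pairing d (emb f)) HsF.
have [fb Hfb Hfbmax] := seq_argmax (fun f => pairing d (emb f)) HsF.
pose al := pairing d (emb fa); pose be := pairing d (emb fb).
have Hw0 : forall f, f \in sF -> pairing w (emb f) = 0.
  by move=> f /Hf0; rewrite pairing_emb => ->.
have Hab : al < be.
  case: (ltP al be) => // Hc; exfalso.
  have e1 : pairing d (emb f1) = pairing d (emb f2).
    have := Hfamin _ Hf1; have := Hfamin _ Hf2.
    have := Hfbmax _ Hf1; have := Hfbmax _ Hf2; rewrite -/al -/be.
    move=> a1 a2 a3 a4; lra.
  have := Hind _ _ (etrans (Hw0 _ Hf1) (esym (Hw0 _ Hf2))) e1.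
  case=> /intr_inj E1 /intr_inj E2; move/eqP: Hf12; apply.
  exact: injective_projections.
have Fb : forall b, conv_pts sF b -> [/\ pairing w b = 0, al <= pairing d b & pairing d b <= be].
  move=> b Hb; split.
  - by apply: (conv_pts_eq (affine_pair w) Hb) => v /Hw0.
  - rewrite -subr_ge0; apply: (conv_pts_bound (phi := fun x => pairing d x - al) _ Hb).
      exact: affine_sub (affine_pair d) (affine_cst al).
    by move=> v Hv; rewrite subr_ge0; apply: Hfamin.
  - rewrite -subr_ge0; apply: (conv_pts_bound (phi := fun x => be - pairing d x) _ Hb).
      exact: affine_sub (affine_cst be) (affine_pair d).
    by move=> v Hv; rewrite subr_ge0; apply: Hfbmax.
have HHR : 0 < H + R by lra.
pose sl := fun x => (pairing d x - p1) * (H + R) - (p0 - p1) * (pairing w x + R).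
pose sr := fun x => p2 * (H + R) + (p0 - p2) * (pairing w x + R) - pairing d x * (H + R).
have Asl : affine sl.
  apply: (affine_ext (g := fun x => (-(p0-p1)) * pairing w x + (H+R) * pairing d x
             + (- p1 * (H+R) - (p0-p1) * R))); last exact: affine_pp.
  by move=> x; rewrite /sl; ring.
have Asr : affine sr.
  apply: (affine_ext (g := fun x => (p0-p2) * pairing w x + (-(H+R)) * pairing d x
             + (p2 * (H+R) + (p0-p2) * R))); last exact: affine_pp.
  by move=> x; rewrite /sr; ring.
have Pf : forall y, triangle v0 v1 v2 y ->
    [/\ 0 <= sl y, 0 <= sr y, - R <= pairing w y & pairing w y <= H].
  move=> y Hy; split.
  - apply: (hull_bound Asl Hy) => z; rewrite !inE => /or3P [] /eqP ->;
      rewrite /sl ?hv0 ?hv1 ?hv2 -/p0 -/p1 -/p2; nra.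
  - apply: (hull_bound Asr Hy) => z; rewrite !inE => /or3P [] /eqP ->;
      rewrite /sr ?hv0 ?hv1 ?hv2 -/p0 -/p1 -/p2; nra.
  - rewrite -subr_ge0 opprK.
    apply: (hull_bound (affine_add (affine_pair w) (affine_cst R)) Hy) => z;
      rewrite !inE => /or3P [] /eqP ->; rewrite ?hv0 ?hv1 ?hv2; lra.
  - rewrite -subr_ge0.
    apply: (hull_bound (affine_sub (affine_cst H) (affine_pair w)) Hy) => z;
      rewrite !inE => /or3P [] /eqP ->; rewrite ?hv0 ?hv1 ?hv2; lra.
have Sl : forall (k : int) y, slice (triangle v0 v1 v2) w k y ->
    [/\ 0 <= sl y, 0 <= sr y & pairing w y = k%:~R].
  move=> k y Hy; split.
  - by apply: (conv_bound Asl Hy) => z [Pz _]; case: (Pf z Pz).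
  - by apply: (conv_bound Asr Hy) => z [Pz _]; case: (Pf z Pz).
  - apply/eqP; rewrite -subr_eq0; apply/eqP.
    apply: (conv_eq (phi := fun x => pairing w x - k%:~R) _ Hy) => [|z [_ [_ ->]]].
      exact: affine_sub (affine_pair w) (affine_cst _).
    by rewrite subrr.
pose SL := fun x => (pairing d x - pairing w x * al - p1) * (H + R) - (p0 - p1) * (pairing w x + R).
pose SR := fun x => p2 * (H + R) + (p0 - p2) * (pairing w x + R) - (pairing d x - pairing w x * be) * (H + R).
pose sb := fun x => pairing w x + R.
pose st := fun x => H - pairing w x.
have ASL : affine SL.
  apply: (affine_ext (g := fun x => (-(al * (H+R)) - (p0-p1)) * pairing w x + (H+R) * pairing d x
             + (- p1 * (H+R) - (p0-p1) * R))); last exact: affine_pp.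
  by move=> x; rewrite /SL; ring.
have ASR : affine SR.
  apply: (affine_ext (g := fun x => ((p0-p2) + be * (H+R)) * pairing w x + (-(H+R)) * pairing d x
             + (p2 * (H+R) + (p0-p2) * R))); last exact: affine_pp.
  by move=> x; rewrite /SR; ring.
have Asb : affine sb by apply: affine_add (affine_pair w) (affine_cst R).
have Ast : affine st by apply: affine_sub (affine_cst H) (affine_pair w).
have Sf : forall y,
   (exists k : int, hmin w v0 v1 v2 <= k < 0 /\ conv_pts (G k) y) \/
   (exists k : int, 0 <= k <= hmax w v0 v1 v2 /\
       msum (slice (triangle v0 v1 v2) w k) (dil k%:~R (conv_pts sF)) y) ->
   [/\ 0 <= SL y, 0 <= SR y, 0 <= sb y & 0 <= st y].
  move=> y [[k [Hk Hy]]|[k [Hk Hy]]].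
  - have [HG1 HG2 HG3] := HG k Hk.
    have Hqy : pairing w y = k%:~R.
      apply/eqP; rewrite -subr_eq0; apply/eqP.
      apply: (conv_pts_eq (phi := fun x => pairing w x - k%:~R) _ Hy) => [|v Hv].
        exact: affine_sub (affine_pair w) (affine_cst _).
      by rewrite pairing_emb HG1 // subrr.
    have Hk' := Hk; rewrite Hmin in Hk'; move/andP: Hk' => [Hk1 Hk2].
    have Hms : forall f, f \in sF ->
        slice (triangle v0 v1 v2) w k (qadd y (qscale (- k%:~R) (emb f))).
      move=> f Hf; apply: HG3; exists y, (qscale (- k%:~R) (emb f)); split => //; split => //.
      by exists (emb f); split => //; apply: conv_pts_mem.
    have [sla _ _] := Sl _ _ (Hms _ Hfa).
    have [_ srb _] := Sl _ _ (Hms _ Hfb).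
    move: sla srb; rewrite /sl /sr !pairing_qadd !pairing_qscale !Hw0 // Hqy -/al -/be => sla srb.
    have HkR : 0 <= k%:~R + R.
      by rewrite /R /r -intrD ler0z subr_ge0.
    have HkH : k%:~R < H by rewrite /H ltr_int; apply: lt_trans Hpos.
    by split; rewrite /SL /SR /sb /st Hqy; nra.
  - move: Hy => [a [b' [Ha [[b [Hb ->]] ->]]]].
    have [sla sra Hqa] := Sl _ _ Ha.
    have [Hqb Hb1 Hb2] := Fb _ Hb.
    rewrite Hmax in Hk; move/andP: Hk => [Hk1 Hk2].
    have Hk0 : 0 <= k%:~R :> rat by rewrite ler0z.
    have HkH : k%:~R <= H by rewrite ler_int.
    have X1 := mulr_ge0 (mulr_ge0 Hk0 (subr_ge0_ Hb1)) (ltW HHR).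
    have X2 := mulr_ge0 (mulr_ge0 Hk0 (subr_ge0_ Hb2)) (ltW HHR).
    move: sla sra; rewrite /sl /sr Hqa => sla sra.
    by split; rewrite /SL /SR /sb /st !pairing_qadd !pairing_qscale Hqa Hqb; nra.
have Mf : forall x, mutation v0 v1 v2 w sF G x ->
    [/\ 0 <= SL x, 0 <= SR x, 0 <= sb x & 0 <= st x].
  move=> x Hx; split.
  - by apply: (conv_bound ASL Hx) => y /Sf [].
  - by apply: (conv_bound ASR Hx) => y /Sf [].
  - by apply: (conv_bound Asb Hx) => y /Sf [].
  - by apply: (conv_bound Ast Hx) => y /Sf [].
have hA1 : pairing w (ptA v1 fa r) = - R.
  by rewrite /ptA pairing_qadd pairing_qscale hv1 Hw0 // /R; ring.
have dA1 : pairing d (ptA v1 fa r) = p1 - R * al.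
  by rewrite /ptA pairing_qadd pairing_qscale -/p1 -/al /R; ring.
have hA2 : pairing w (ptA v2 fb r) = - R.
  by rewrite /ptA pairing_qadd pairing_qscale hv2 Hw0 // /R; ring.
have dA2 : pairing d (ptA v2 fb r) = p2 - R * be.
  by rewrite /ptA pairing_qadd pairing_qscale -/p2 -/be /R; ring.
have hC1 : pairing w (ptC v0 fa h) = H.
  by rewrite /ptC pairing_qadd pairing_qscale hv0 Hw0 // /H; ring.
have dC1 : pairing d (ptC v0 fa h) = p0 + H * al.
  by rewrite /ptC pairing_qadd pairing_qscale -/p0 -/al /H; ring.
have hC2 : pairing w (ptC v0 fb h) = H.
  by rewrite /ptC pairing_qadd pairing_qscale hv0 Hw0 // /H; ring.
have dC2 : pairing d (ptC v0 fb h) = p0 + H * be.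
  by rewrite /ptC pairing_qadd pairing_qscale -/p0 -/be /H; ring.
have Hkmin : hmin w v0 v1 v2 <= hmin w v0 v1 v2 < 0 by rewrite lexx Hmin.
have [HG1 HG2 HG3] := HG _ Hkmin.
have HmR : - (hmin w v0 v1 v2)%:~R = R by rewrite Hmin /R /r intrN.
have Gfacts : forall a, conv_pts (G (hmin w v0 v1 v2)) a ->
   pairing w a = - R /\ forall f, f \in sF ->
     slice (triangle v0 v1 v2) w (hmin w v0 v1 v2) (qadd a (qscale R (emb f))).
  move=> a Ha; split.
    apply/eqP; rewrite -subr_eq0 opprK; apply/eqP.
    apply: (conv_pts_eq (phi := fun x => pairing w x + R) _ Ha) => [|v Hv].
      exact: affine_add (affine_pair w) (affine_cst _).
    by rewrite pairing_emb HG1 // -HmR addrN.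
  move=> f Hf; apply: HG3; exists a, (qscale R (emb f)); split => //; split => //.
  by exists (emb f); split; [apply: conv_pts_mem|rewrite HmR].
have MA1 : mutation v0 v1 v2 w sF G (ptA v1 fa r).
  have Hm1 : v1 \in [:: v0; v1; v2] by rewrite !inE eqxx orbT.
  have Hh1 : wval w v1 = hmin w v0 v1 v2 by rewrite Hmin.
  have [a [b' [Ha [[b [Hb Eb']] Ev1]]]] := HG2 v1 Hm1 Hh1.
  rewrite HmR in Eb'; subst b'.
  have [Hqa Hsa] := Gfacts a Ha.
  have [sla _ _] := Sl _ _ (Hsa _ Hfa).
  move: sla; rewrite /sl !pairing_qadd !pairing_qscale Hw0 // Hqa -/al => sla.
  have [_ Hb1 _] := Fb _ Hb.
  have Ep := congr1 (pairing d) Ev1; rewrite pairing_qadd pairing_qscale -/p1 in Ep.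
  have Ea : a = ptA v1 fa r.
    by apply: Hind; [rewrite hA1 | rewrite dA1]; nra.
  by apply: conv_in; left; exists (hmin w v0 v1 v2); split => //; rewrite -Ea.
have MA2 : mutation v0 v1 v2 w sF G (ptA v2 fb r).
  have Hm1 : v2 \in [:: v0; v1; v2] by rewrite !inE eqxx !orbT.
  have Hh1 : wval w v2 = hmin w v0 v1 v2 by rewrite Hmin.
  have [a [b' [Ha [[b [Hb Eb']] Ev1]]]] := HG2 v2 Hm1 Hh1.
  rewrite HmR in Eb'; subst b'.
  have [Hqa Hsa] := Gfacts a Ha.
  have [_ sra _] := Sl _ _ (Hsa _ Hfb).
  move: sra; rewrite /sr !pairing_qadd !pairing_qscale Hw0 // Hqa -/be => sra.
  have [_ _ Hb2] := Fb _ Hb.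
  have Ep := congr1 (pairing d) Ev1; rewrite pairing_qadd pairing_qscale -/p2 in Ep.
  have Ea : a = ptA v2 fb r.
    by apply: Hind; [rewrite hA2 | rewrite dA2]; nra.
  by apply: conv_in; left; exists (hmin w v0 v1 v2); split => //; rewrite -Ea.
have Sv0 : slice (triangle v0 v1 v2) w h (emb v0).
  apply: conv_in; split; first by apply: hull_mem; rewrite mem_head.
  by split; [exists v0|rewrite hv0].
have Hh : 0 <= h <= hmax w v0 v1 v2 by rewrite Hmax lexx andbT ltW.
have MC1 : mutation v0 v1 v2 w sF G (ptC v0 fa h).
  apply: conv_in; right; exists h; split => //; exists (emb v0), (qscale h%:~R (emb fa)).
  by split => //; split => //; exists (emb fa); split => //; apply: conv_pts_mem.
have MC2 : mutation v0 v1 v2 w sF G (ptC v0 fb h).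
  apply: conv_in; right; exists h; split => //; exists (emb v0), (qscale h%:~R (emb fb)).
  by split => //; split => //; exists (emb fb); split => //; apply: conv_pts_mem.
have HHR0 : H + R != 0 by rewrite gt_eqF.
exists fa, fb, r, h; split => //.
- by split; apply: Hf0.
- split; split.
  + apply: (exposed_of Asb ASL) => //; first (by move=> z /Mf []); first (by move=> z /Mf []).
    * by rewrite /sb hA1 addNr.
    * by rewrite /SL hA1 dA1; ring.
    * move=> z Mz Eb El; apply: Hind; first by rewrite hA1; move: Eb; rewrite /sb; lra.
      have Hz : pairing w z = - R by move: Eb; rewrite /sb; lra.
      have E' : (pairing d z - (p1 - R * al)) * (H + R) = SL z by rewrite /SL Hz; ring.
      move: E'; rewrite El => /eqP; rewrite mulf_eq0 (negbTE HHR0) orbF subr_eq0 => /eqP ->.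
      by rewrite dA1.
  + apply: (exposed_of Asb ASR) => //; first (by move=> z /Mf []); first (by move=> z /Mf []).
    * by rewrite /sb hA2 addNr.
    * by rewrite /SR hA2 dA2; ring.
    * move=> z Mz Eb El; apply: Hind; first by rewrite hA2; move: Eb; rewrite /sb; lra.
      have Hz : pairing w z = - R by move: Eb; rewrite /sb; lra.
      have E' : (p2 - R * be - pairing d z) * (H + R) = SR z by rewrite /SR Hz; ring.
      move: E'; rewrite El => /eqP; rewrite mulf_eq0 (negbTE HHR0) orbF subr_eq0 => /eqP <-.
      by rewrite dA2.
  + apply: (exposed_of Ast ASL) => //; first (by move=> z /Mf []); first (by move=> z /Mf []).
    * by rewrite /st hC1 subrr.
    * by rewrite /SL hC1 dC1; ring.
    * move=> z Mz Eb El; apply: Hind; first by rewrite hC1; move: Eb; rewrite /st; lra.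
      have Hz : pairing w z = H by move: Eb; rewrite /st; lra.
      have E' : (pairing d z - (p0 + H * al)) * (H + R) = SL z by rewrite /SL Hz; ring.
      move: E'; rewrite El => /eqP; rewrite mulf_eq0 (negbTE HHR0) orbF subr_eq0 => /eqP ->.
      by rewrite dC1.
  + apply: (exposed_of Ast ASR) => //; first (by move=> z /Mf []); first (by move=> z /Mf []).
    * by rewrite /st hC2 subrr.
    * by rewrite /SR hC2 dC2; ring.
    * move=> z Mz Eb El; apply: Hind; first by rewrite hC2; move: Eb; rewrite /st; lra.
      have Hz : pairing w z = H by move: Eb; rewrite /st; lra.
      have E' : (p0 + H * be - pairing d z) * (H + R) = SR z by rewrite /SR Hz; ring.
      move: E'; rewrite El => /eqP; rewrite mulf_eq0 (negbTE HHR0) orbF subr_eq0 => /eqP <-.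
      by rewrite dC2.
- split.
  + by move=> E; have := congr1 (pairing w) E; rewrite hA1 hC1; lra.
  + by move=> E; have := congr1 (pairing w) E; rewrite hA1 hC2; lra.
  + by move=> E; have := congr1 (pairing w) E; rewrite hA2 hC1; lra.
  + by move=> E; have := congr1 (pairing w) E; rewrite hA2 hC2; lra.
  + split.
      by move=> E; have := congr1 (pairing d) E; rewrite dC1 dC2; nra.
    apply/eqP => E0.
    have E1 : det2 (ptC v0 fa h) (ptC v0 fb h) * (w.1%:~R * d.2%:~R - w.2%:~R * d.1%:~R)
       = pairing w (ptC v0 fa h) * pairing d (ptC v0 fb h)
         - pairing w (ptC v0 fb h) * pairing d (ptC v0 fa h).
      by rewrite /det2 /pairing; ring.
    move: E1; rewrite E0 mul0r hC1 hC2 dC1 dC2 => E1.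
    have E2 : H * H * (be - al) = H * (p0 + H * be) - H * (p0 + H * al) by ring.
    have : 0 < H * H * (be - al) by rewrite !mulr_gt0 // subr_gt0.
    by rewrite E2 -E1 ltxx.
Qed.



End Aux8.


Section Aux9.
Local Open Scope ring_scope.

Lemma weights_swap01 v0 v1 v2 l0 l1 l2 :
  weights v0 v1 v2 l0 l1 l2 -> weights v1 v0 v2 l1 l0 l2.
Proof.
move=> [[p0 p1 p2 Hg] [E1 E2]]; split; first by split => //; rewrite gcdnCA.
split.
  by transitivity (l0%:Z * v0.1 + l1%:Z * v1.1 + l2%:Z * v2.1); [ring|].
by transitivity (l0%:Z * v0.2 + l1%:Z * v1.2 + l2%:Z * v2.2); [ring|].
Qed.

Lemma weights_swap12 v0 v1 v2 l0 l1 l2 :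
  weights v0 v1 v2 l0 l1 l2 -> weights v0 v2 v1 l0 l2 l1.
Proof.
move=> [[p0 p1 p2 Hg] [E1 E2]]; split; first by split => //; rewrite (gcdnC l2).
split.
  by transitivity (l0%:Z * v0.1 + l1%:Z * v1.1 + l2%:Z * v2.1); [ring|].
by transitivity (l0%:Z * v0.2 + l1%:Z * v1.2 + l2%:Z * v2.2); [ring|].
Qed.

Lemma pigeon4 (T : Type) (a b c d e0 e1 e2 : T) :
  a <> b -> a <> c -> a <> d -> b <> c -> b <> d -> c <> d ->
  [\/ a = e0, a = e1 | a = e2] -> [\/ b = e0, b = e1 | b = e2] ->
  [\/ c = e0, c = e1 | c = e2] -> [\/ d = e0, d = e1 | d = e2] -> False.
Proof.
move=> ? ? ? ? ? ?.
by case=> ?; case=> ?; case=> ?; case=> ?; subst; congruence.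
Qed.

Lemma rel_unique (A C D : qpt) (x y z x' y' z' : rat) : det2 C D != 0 ->
  x * A.1 + y * C.1 + z * D.1 = 0 -> x * A.2 + y * C.2 + z * D.2 = 0 ->
  x' * A.1 + y' * C.1 + z' * D.1 = 0 -> x' * A.2 + y' * C.2 + z' * D.2 = 0 ->
  x' * y = x * y' /\ x' * z = x * z'.
Proof.
move=> Hd E1 E2 F1 F2.
have G1 : (x' * y - x * y') * det2 C D =
   (x' * (x * A.1 + y * C.1 + z * D.1) - x * (x' * A.1 + y' * C.1 + z' * D.1)) * D.2
 - (x' * (x * A.2 + y * C.2 + z * D.2) - x * (x' * A.2 + y' * C.2 + z' * D.2)) * D.1.
  by rewrite /det2; ring.
have G2 : (x' * z - x * z') * det2 C D =
   C.1 * (x' * (x * A.2 + y * C.2 + z * D.2) - x * (x' * A.2 + y' * C.2 + z' * D.2))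
 - C.2 * (x' * (x * A.1 + y * C.1 + z * D.1) - x * (x' * A.1 + y' * C.1 + z' * D.1)).
  by rewrite /det2; ring.
have {}G1 : (x' * y - x * y') * det2 C D = 0 by rewrite G1 E1 E2 F1 F2; ring.
have {}G2 : (x' * z - x * z') * det2 C D = 0 by rewrite G2 E1 E2 F1 F2; ring.
move/eqP: G1; rewrite mulf_eq0 (negbTE Hd) orbF subr_eq0 => /eqP ->.
by move/eqP: G2; rewrite mulf_eq0 (negbTE Hd) orbF subr_eq0 => /eqP ->.
Qed.

Lemma natz_rat (n : nat) : ((n%:Z)%:~R : rat) = n%:R.
Proof. by []. Qed.

Lemma weights_rat v0 v1 v2 l0 l1 l2 : weights v0 v1 v2 l0 l1 l2 ->
  l0%:R * (emb v0).1 + l1%:R * (emb v1).1 + l2%:R * (emb v2).1 = 0 :> rat /\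
  l0%:R * (emb v0).2 + l1%:R * (emb v1).2 + l2%:R * (emb v2).2 = 0 :> rat.
Proof.
move=> [_ [E1 E2]]; split.
  by have := congr1 (fun z : int => z%:~R : rat) E1; rewrite /= !intrD !intrM.
by have := congr1 (fun z : int => z%:~R : rat) E2; rewrite /= !intrD !intrM.
Qed.

End Aux9.


Section Aux10.
Local Open Scope ring_scope.

Lemma core v0 v1 v2 u0 u1 u2 (l0 l1 l2 m0 m1 m2 : nat) w sF G :
  fano_triangle v0 v1 v2 -> fano_triangle u0 u1 u2 ->
  weights v0 v1 v2 l0 l1 l2 -> weights u0 u1 u2 m0 m1 m2 ->
  primitive w -> factor_with v0 v1 v2 w sF G -> nontrivial sF ->
  iso (mutation v0 v1 v2 w sF G) (triangle u0 u1 u2) ->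
  wval w v1 = wval w v2 -> wval w v1 < wval w v0 ->
  (l0 %| (l1 + l2) ^ 2)%N /\ perm_eq [:: m0; m1; m2] [:: l1; l2; ((l1 + l2) ^ 2 %/ l0)%N].
Proof.
move=> Fv Fu Wv Wu Hw HF Hnt [a [b [c [d [Hdet HT]]]]] E12 Hlt.
have [fa [fb [r [h /= [[Hfa Hfb] [Er Eh] [Hr Hh] [[EA1 EA2] [EC1 EC2]]
   [nAC nAD nBC nBD [nCD Hdt]]]]]]] := geom Fv Hw HF Hnt E12 Hlt.
have Hdn : a * d - b * c != 0 by case: Hdet => ->.
set A1 := ptA v1 fa r in EA1 nAC nAD *; set A2 := ptA v2 fb r in EA2 nBC nBD *.
set C := ptC v0 fa h in EC1 nAC nBC nCD Hdt *.
set D := ptC v0 fb h in EC2 nAD nBD nCD Hdt *.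
pose L := lmap a b c d.
have tA1 := exposed_tri (exposed_lin Hdn HT EA1).
have tA2 := exposed_tri (exposed_lin Hdn HT EA2).
have tC1 := exposed_tri (exposed_lin Hdn HT EC1).
have tC2 := exposed_tri (exposed_lin Hdn HT EC2).
have Linj : forall x y, x <> y -> L x <> L y := fun x y H E => H (lmap_inj Hdn E).
have EAB : A1 = A2.
  case: (A1 =P A2) => // nAB; exfalso.
  exact: (pigeon4 (Linj _ _ nAB) (Linj _ _ nAC) (Linj _ _ nAD) (Linj _ _ nBC)
     (Linj _ _ nBD) (Linj _ _ nCD) tA1 tA2 tC1 tC2).
have Key : forall p q s (x y z : nat), weights p q s x y z -> primitive p ->
   emb p = lmap a b c d A1 -> emb q = lmap a b c d C -> emb s = lmap a b c d D -> perm_eq [:: m0; m1; m2] [:: y; z; x] ->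
   (l0 %| (l1 + l2) ^ 2)%N /\ perm_eq [:: m0; m1; m2] [:: l1; l2; ((l1 + l2) ^ 2 %/ l0)%N].
  move=> p q s x y z Wpq Hp Ep Eq Es Hperm.
  have cyz := wf_coprime Wpq Hp.
  have [[px py pz _] _] := Wpq.
  have [Rp1 Rp2] := weights_rat Wpq.
  rewrite Ep Eq Es in Rp1 Rp2.
  have [Hc1 Hc2] : x%:R * A1.1 + y%:R * C.1 + z%:R * D.1 = 0 /\
                   x%:R * A1.2 + y%:R * C.2 + z%:R * D.2 = 0 :> rat.
    have : lmap a b c d (x%:R * A1.1 + y%:R * C.1 + z%:R * D.1,
                         x%:R * A1.2 + y%:R * C.2 + z%:R * D.2) = lmap a b c d (0, 0).
      rewrite /lmap /=; congr pair.
        by rewrite !mulr0 addr0 -Rp1 /lmap /=; ring.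
      by rewrite !mulr0 addr0 -Rp2 /lmap /=; ring.
    by move/(lmap_inj Hdn) => [-> ->].
  have [Rv1 Rv2] := weights_rat Wv.
  have [[pl0 pl1 pl2 _] [Ev1 Ev2]] := Wv.
  have Hli : l0%:Z * h = (l1 + l2)%:Z * r.
    apply/eqP; rewrite -subr_eq0; apply/eqP.
    transitivity (l0%:Z * wval w v0 + l1%:Z * wval w v1 + l2%:Z * wval w v2).
      by rewrite Eh Er E12 PoszD; ring.
    transitivity (w.1 * (l0%:Z * v0.1 + l1%:Z * v1.1 + l2%:Z * v2.1)
                + w.2 * (l0%:Z * v0.2 + l1%:Z * v1.2 + l2%:Z * v2.2)).
      by rewrite /wval; ring.
    by rewrite Ev1 Ev2; ring.
  have Hlh := congr1 (fun t : int => t%:~R : rat) Hli.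
  rewrite /= !intrM !natz_rat in Hlh.
  have EAB1 := congr1 fst EAB; have EAB2 := congr1 snd EAB.
  have Hmu1 : ((l1 + l2) ^ 2)%:R * A1.1 + (l0 * l1)%:R * C.1 + (l0 * l2)%:R * D.1 = 0 :> rat.
    transitivity ((l1 + l2)%:R * (l0%:R * (emb v0).1 + l1%:R * (emb v1).1 + l2%:R * (emb v2).1)
       + l2%:R * (l1 + l2)%:R * (A1.1 - A2.1)
       + (l1%:R * (emb fa).1 + l2%:R * (emb fb).1) * (l0%:R * h%:~R - (l1 + l2)%:R * r%:~R)).
      by rewrite /A1 /A2 /C /D /ptA /ptC /qadd /qscale /= natrX !natrD !natrM; ring.
    by rewrite Rv1 EAB1 subrr Hlh subrr; ring.
  have Hmu2 : ((l1 + l2) ^ 2)%:R * A1.2 + (l0 * l1)%:R * C.2 + (l0 * l2)%:R * D.2 = 0 :> rat.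
    transitivity ((l1 + l2)%:R * (l0%:R * (emb v0).2 + l1%:R * (emb v1).2 + l2%:R * (emb v2).2)
       + l2%:R * (l1 + l2)%:R * (A1.2 - A2.2)
       + (l1%:R * (emb fa).2 + l2%:R * (emb fb).2) * (l0%:R * h%:~R - (l1 + l2)%:R * r%:~R)).
      by rewrite /A1 /A2 /C /D /ptA /ptC /qadd /qscale /= natrX !natrD !natrM; ring.
    by rewrite Rv2 EAB2 subrr Hlh subrr; ring.
  have [U1 U2] := rel_unique Hdt Hc1 Hc2 Hmu1 Hmu2.
  have N1 : (x * (l0 * l1) = (l1 + l2) ^ 2 * y)%N.
    by move: U1; rewrite -!natrM => /eqP; rewrite eqr_nat => /eqP ->.
  have N2 : (x * (l0 * l2) = (l1 + l2) ^ 2 * z)%N.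
    by move: U2; rewrite -!natrM => /eqP; rewrite eqr_nat => /eqP ->.
  have [pv0 _ _ _] := Fv.
  have c12 := wf_coprime Wv pv0.
  have [Ey Ez Hdv Hx] := final_nt pl0 pl1 pl2 px py c12 cyz N1 N2.
  by split => //; rewrite Hx -Ey -Ez.
have [pu0 pu1 pu2 _] := Fu.
have W102 := weights_swap01 Wu.
have W021 := weights_swap12 Wu.
have W120 := weights_swap12 W102.
have W201 := weights_swap01 W021.
have W210 := weights_swap12 W201.
have nLAC : lmap a b c d A1 <> lmap a b c d C := Linj _ _ nAC.
have nLAD : lmap a b c d A1 <> lmap a b c d D := Linj _ _ nAD.
have nLCD : lmap a b c d C <> lmap a b c d D := Linj _ _ nCD.
case: tA1 => EA; case: tC1 => EC; case: tC2 => ED; try by exfalso; congruence.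
all: first [ apply: (Key _ _ _ _ _ _ Wu _ (esym EA) (esym EC) (esym ED))
           | apply: (Key _ _ _ _ _ _ W102 _ (esym EA) (esym EC) (esym ED))
           | apply: (Key _ _ _ _ _ _ W021 _ (esym EA) (esym EC) (esym ED))
           | apply: (Key _ _ _ _ _ _ W120 _ (esym EA) (esym EC) (esym ED))
           | apply: (Key _ _ _ _ _ _ W201 _ (esym EA) (esym EC) (esym ED))
           | apply: (Key _ _ _ _ _ _ W210 _ (esym EA) (esym EC) (esym ED)) ].
all: try done.
all: by apply/permP => ? /=; lia.
Qed.

End Aux10.


Section Aux11.
Local Open Scope ring_scope.

Lemma tri_swap01 v0 v1 v2 : triangle v1 v0 v2 = triangle v0 v1 v2.
Proof.
apply: functional_extensionality => x; apply: propositional_extensionality.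
rewrite /triangle /conv_pts /=.
split => /in_hull3 [c0 [c1 [c2 [h0 h1 h2 Hs ->]]]]; apply/in_hull3;
  exists c1, c0, c2; (split => //; [lra | congr pair; ring]).
Qed.

Lemma tri_swap12 v0 v1 v2 : triangle v0 v2 v1 = triangle v0 v1 v2.
Proof.
apply: functional_extensionality => x; apply: propositional_extensionality.
rewrite /triangle /conv_pts /=.
split => /in_hull3 [c0 [c1 [c2 [h0 h1 h2 Hs ->]]]]; apply/in_hull3;
  exists c0, c2, c1; (split => //; [lra | congr pair; ring]).
Qed.

Lemma hmin_swap01 w v0 v1 v2 : hmin w v1 v0 v2 = hmin w v0 v1 v2.
Proof. by rewrite /hmin minCA. Qed.
Lemma hmin_swap12 w v0 v1 v2 : hmin w v0 v2 v1 = hmin w v0 v1 v2.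
Proof. by rewrite /hmin (minC (wval w v2)). Qed.
Lemma hmax_swap01 w v0 v1 v2 : hmax w v1 v0 v2 = hmax w v0 v1 v2.
Proof. by rewrite /hmax maxCA. Qed.
Lemma hmax_swap12 w v0 v1 v2 : hmax w v0 v2 v1 = hmax w v0 v1 v2.
Proof. by rewrite /hmax (maxC (wval w v2)). Qed.

Lemma factor_swap01 v0 v1 v2 w sF G :
  factor_with v0 v1 v2 w sF G -> factor_with v1 v0 v2 w sF G.
Proof.
move=> [H1 [H2 H3]]; split => //; split => // k.
rewrite hmin_swap01 tri_swap01 => Hk; have [A B C] := H3 k Hk; split => // v Hv; apply: B.
by move: Hv; rewrite !inE; case/or3P => ->; rewrite ?orbT.
Qed.

Lemma factor_swap12 v0 v1 v2 w sF G :
  factor_with v0 v1 v2 w sF G -> factor_with v0 v2 v1 w sF G.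
Proof.
move=> [H1 [H2 H3]]; split => //; split => // k.
rewrite hmin_swap12 tri_swap12 => Hk; have [A B C] := H3 k Hk; split => // v Hv; apply: B.
by move: Hv; rewrite !inE; case/or3P => ->; rewrite ?orbT.
Qed.

Lemma mut_swap01 v0 v1 v2 w sF G : mutation v1 v0 v2 w sF G = mutation v0 v1 v2 w sF G.
Proof. by rewrite /mutation hmin_swap01 hmax_swap01 tri_swap01. Qed.
Lemma mut_swap12 v0 v1 v2 w sF G : mutation v0 v2 v1 w sF G = mutation v0 v1 v2 w sF G.
Proof. by rewrite /mutation hmin_swap12 hmax_swap12 tri_swap12. Qed.

Lemma fano_swap01 v0 v1 v2 : fano_triangle v0 v1 v2 -> fano_triangle v1 v0 v2.
Proof. by move=> [p0 p1 p2 O]; split => //; rewrite tri_swap01. Qed.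
Lemma fano_swap12 v0 v1 v2 : fano_triangle v0 v1 v2 -> fano_triangle v0 v2 v1.
Proof. by move=> [p0 p1 p2 O]; split => //; rewrite tri_swap12. Qed.

Definition Hyps v0 v1 v2 u0 u1 u2 (l0 l1 l2 : nat) w sF G : Prop :=
  [/\ fano_triangle v0 v1 v2, weights v0 v1 v2 l0 l1 l2, factor_with v0 v1 v2 w sF G &
      iso (mutation v0 v1 v2 w sF G) (triangle u0 u1 u2)].

Lemma hyps_swap01 v0 v1 v2 u0 u1 u2 l0 l1 l2 w sF G :
  Hyps v0 v1 v2 u0 u1 u2 l0 l1 l2 w sF G -> Hyps v1 v0 v2 u0 u1 u2 l1 l0 l2 w sF G.
Proof.
move=> [F W H I]; split; [exact: fano_swap01|exact: weights_swap01|exact: factor_swap01|].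
by rewrite mut_swap01.
Qed.
Lemma hyps_swap12 v0 v1 v2 u0 u1 u2 l0 l1 l2 w sF G :
  Hyps v0 v1 v2 u0 u1 u2 l0 l1 l2 w sF G -> Hyps v0 v2 v1 u0 u1 u2 l0 l2 l1 w sF G.
Proof.
move=> [F W H I]; split; [exact: fano_swap12|exact: weights_swap12|exact: factor_swap12|].
by rewrite mut_swap12.
Qed.

Lemma no_unique_min v0 v1 v2 w sF G :
  fano_triangle v0 v1 v2 -> primitive w -> factor_with v0 v1 v2 w sF G -> nontrivial sF ->
  wval w v0 < wval w v1 -> wval w v0 < wval w v2 -> False.
Proof.
move=> Fv Hw [HsF [Hf0 HG]] [f1 [f2 [Hf1 Hf2 Hf12]]] L1 L2.
have [Hs1 _] := fano_signs Fv Hw.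
have Hneg : wval w v0 < 0.
  case: (ltP (wval w v0) 0) => // Hc; exfalso; apply: Hs1.
  by split => //; split; apply: ltW; apply: le_lt_trans Hc _.
have Hmin : hmin w v0 v1 v2 = wval w v0.
  by rewrite /hmin min_l // le_min !ltW.
have Hk : hmin w v0 v1 v2 <= hmin w v0 v1 v2 < 0 by rewrite lexx Hmin.
have [HG1 HG2 HG3] := HG _ Hk.
have Hm0 : v0 \in [:: v0; v1; v2] by rewrite mem_head.
have [a [b' [Ha [[b [Hb ->]] Ev0]]]] := HG2 v0 Hm0 (esym Hmin).
have Pt : forall y, triangle v0 v1 v2 y -> pairing w y = (wval w v0)%:~R -> y = emb v0.
  move=> y /in_hull3 [c0 [c1 [c2 [h0 h1 h2 Hs Ey]]]] Hy.
  have E : c1 * ((wval w v1)%:~R - (wval w v0)%:~R) + c2 * ((wval w v2)%:~R - (wval w v0)%:~R) = 0.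
    transitivity (pairing w y - (wval w v0)%:~R * (c0 + c1 + c2)).
      by rewrite Ey -!pairing_emb /pairing /=; ring.
    by rewrite Hy Hs; ring.
  have q1 : 0 < (wval w v1)%:~R - (wval w v0)%:~R :> rat by rewrite subr_gt0 ltr_int.
  have q2 : 0 < (wval w v2)%:~R - (wval w v0)%:~R :> rat by rewrite subr_gt0 ltr_int.
  have z1 : c1 = 0 by nra.
  have z2 : c2 = 0 by nra.
  have z0 : c0 = 1 by lra.
  by rewrite Ey z0 z1 z2 /emb /=; congr pair; ring.
have Sl : forall f, f \in sF ->
    qadd a (qscale (- (hmin w v0 v1 v2)%:~R) (emb f)) = emb v0.
  move=> f Hf.
  have Hsl : slice (triangle v0 v1 v2) w (hmin w v0 v1 v2)
               (qadd a (qscale (- (hmin w v0 v1 v2)%:~R) (emb f))).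
    apply: HG3; exists a, (qscale (- (hmin w v0 v1 v2)%:~R) (emb f)); split => //; split => //.
    by exists (emb f); split => //; apply: conv_pts_mem.
  set y := qadd _ _ in Hsl *.
  have e1 : 1 * y.1 + 0 * y.2 + - (emb v0).1 = 0.
    apply: (conv_eq (affine_lin 1 0 (- (emb v0).1)) Hsl) => z [Pz [_ Hz]].
      by rewrite Hmin in Hz; rewrite (Pt z Pz Hz); ring.
  have e2 : 0 * y.1 + 1 * y.2 + - (emb v0).2 = 0.
    apply: (conv_eq (affine_lin 0 1 (- (emb v0).2)) Hsl) => z [Pz [_ Hz]].
      by rewrite Hmin in Hz; rewrite (Pt z Pz Hz); ring.
  rewrite /emb /= in e1 e2 *; apply: injective_projections => /=; lra.
have := Sl _ Hf1; rewrite -(Sl _ Hf2) => E.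
have Ht : - (hmin w v0 v1 v2)%:~R != 0 :> rat by rewrite oppr_eq0 intr_eq0 Hmin; apply: ltr0_neq0.
move/eqP: Hf12; apply; case: E => E1 E2.
apply: injective_projections; apply: intr_inj.
  by apply: (mulfI Ht); lra.
by apply: (mulfI Ht); lra.
Qed.

End Aux11.


Section Aux12.
Local Open Scope ring_scope.
Lemma coreH v0 v1 v2 u0 u1 u2 (l0 l1 l2 m0 m1 m2 : nat) w sF G :
  Hyps v0 v1 v2 u0 u1 u2 l0 l1 l2 w sF G -> fano_triangle u0 u1 u2 ->
  weights u0 u1 u2 m0 m1 m2 -> primitive w -> nontrivial sF ->
  wval w v1 = wval w v2 -> wval w v1 < wval w v0 ->
  (l0 %| (l1 + l2) ^ 2)%N /\ perm_eq [:: m0; m1; m2] [:: l1; l2; ((l1 + l2) ^ 2 %/ l0)%N].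
Proof. rewrite /Hyps => -[F W H I] Fu Wu Hw Hnt E Hl; exact: (core F Fu W Wu Hw H Hnt I E Hl). Qed.

Lemma numH v0 v1 v2 u0 u1 u2 (l0 l1 l2 : nat) w sF G :
  Hyps v0 v1 v2 u0 u1 u2 l0 l1 l2 w sF G -> primitive w -> nontrivial sF ->
  wval w v0 < wval w v1 -> wval w v0 < wval w v2 -> False.
Proof. rewrite /Hyps => -[F W H I] Hw Hnt; exact: (no_unique_min F Hw H Hnt). Qed.
End Aux12.

Theorem proposition3p2 (v0 v1 v2 u0 u1 u2 : lpt) (l0 l1 l2 m0 m1 m2 : nat) :
  fano_triangle v0 v1 v2 -> fano_triangle u0 u1 u2 ->
  weights v0 v1 v2 l0 l1 l2 -> weights u0 u1 u2 m0 m1 m2 ->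
  one_step_mutation v0 v1 v2 u0 u1 u2 ->
  exists a b c : nat,
    [/\ perm_eq [:: a; b; c] [:: l0; l1; l2],
        (a %| (b + c) ^ 2)%N &
        perm_eq [:: m0; m1; m2] [:: b; c; ((b + c) ^ 2 %/ a)%N]].
Proof.
move=> Fv Fu Wv Wu [w [sF [G [Hw HF Hnt Hiso]]]].
have H0 : Hyps v0 v1 v2 u0 u1 u2 l0 l1 l2 w sF G by split.
have H1 := hyps_swap01 H0.
have H2 := hyps_swap12 H0.
have H3 := hyps_swap01 H2.
have [Hs1 Hs2] := fano_signs Fv Hw.
case: (ltgtP (wval w v1) (wval w v2)) => E12.
- case: (ltgtP (wval w v1) (wval w v0)) => E10.
  + by exfalso; apply: (numH H1 Hw Hnt).
  + by exfalso; apply: (numH H0 Hw Hnt) => //; apply: lt_trans E12.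
  + have E' : (wval w v0 < wval w v2)%R by rewrite -E10.
    have [D P] := coreH H3 Fu Wu Hw Hnt (esym E10) E'.
    exists l2, l0, l1; split => //; apply/permP => ? /=; lia.
- case: (ltgtP (wval w v2) (wval w v0)) => E20.
  + by exfalso; apply: (numH H3 Hw Hnt).
  + by exfalso; apply: (numH H0 Hw Hnt) => //; apply: lt_trans E12.
  + have E' : (wval w v0 < wval w v1)%R by rewrite -E20.
    have [D P] := coreH H1 Fu Wu Hw Hnt (esym E20) E'.
    exists l1, l0, l2; split => //; apply/permP => ? /=; lia.
- case: (ltgtP (wval w v1) (wval w v0)) => E10.
  + have [D P] := coreH H0 Fu Wu Hw Hnt E12 E10.
    by exists l0, l1, l2; split.
  + by exfalso; apply: (numH H0 Hw Hnt) => //; rewrite -E12.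
  + exfalso; case: (leP 0%R (wval w v0)) => Hc.
      by apply: Hs1; rewrite -E12 E10.
    by have Hc2 := ltW Hc; apply: Hs2; rewrite -E12 E10.
Qed.
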